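(* Assume $(q+1)/d=3$, let $r$ be an integer, $a,b\in\mathbb F_{q^2}^*$, $0\le j_1,j_2<d$, and put $h(X)=1+aX^{1+3j_1}+bX^{2+3j_2}$ and $L_k(X)=1+a\epsilon^{j_1k}X+b\epsilon^{j_2k}X^2$ for $0\le k<d$. Suppose that for every $0\le k<d$ there exist $\tau_k\in\{0,1,2\}$ and $\lambda_k\in\mu_{q+1}$ with $L_k\in\mathcal L_k(2,\tau_k;\lambda_k)$, and that $\gcd(e_k,3)=1$ where $e_k=r-2+\tau_k$. Define $\pi(k)\in\mathbb Z/d\mathbb Z$ by $\lambda_k^3=\epsilon^{\pi(k)}$, and $K_1=\{k:\tau_k=2\}$, $K_2=\{k:\tau_k=1\}$. If $K_1\neq\emptyset$ and $K_2\ne\emptyset$, then $r\equiv-1\pmod3$, $d$ is even, $K_1$ and $K_2$ are the two cosets of $2\mathbb Z/d\mathbb Z$ in $\mathbb Z/d\mathbb Z$, $b^3=-1$, $a=\pm b^{-1}$, $j_1+j_2+1\equiv d/2\pmod d$, $2j_2-j_1+1\equiv d/2\pmod d$, and $\pi(k)+e_kk=rk$ in $\mathbb Z/d\mathbb Z$ for all $k$. Moreover, either $q\equiv5\pmod{18}$ and $h(X)=1+aX^{(q+1)/6}+bX^{(q+1)/3}$, or $q\equiv11\pmod{18}$ and $h(X)=1+aX^{5(q+1)/6}+bX^{2(q+1)/3}$.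
   Context: $q$ is a prime power, $d$ is a positive divisor of $q+1$, and $\epsilon\in\mathbb F_{q^2}^*$ has multiplicative order $d$. $\mu_{q+1}$ is the subgroup of order $q+1$ of $\mathbb F_{q^2}^*$. For $a\in\mathbb F_{q^2}$, $\bar a=a^q$; for $f(X)=\sum_{i=0}^n a_iX^i\in\mathbb F_{q^2}[X]$ with $a_n\neq0$, $\tilde f(X)=\sum_{i=0}^n\bar a_iX^{n-i}$. For $0\le k<d$, $0\le t<(q+1)/d$ and $\lambda\in\mu_{q+1}$: $\mathcal L_k(t,0;\lambda)$ is the set of $L\in\mathbb F_{q^2}[X]$ with $\deg L=t$, $\tilde L=\lambda L$ and $\gcd(L,X^{(q+1)/d}-\epsilon^k)=1$; for an integer $\tau$ with $(q+1)/d-t\le\tau\le t$, $\mathcal L_k(t,\tau;\lambda)$ is the set of $L=P+X^{(q+1)/d-\tau}Q$ with $P,Q\in\mathbb F_{q^2}[X]$, $\deg P=t-\tau$, $\tilde P=\lambda P$, $\deg Q=\tau+t-(q+1)/d$, $\tilde Q=\lambda\epsilon^kQ$, and $\gcd(L,X^{(q+1)/d}-\epsilon^k)=1$. *)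

(* Defs.v *)
From HB Require Import structures.
From mathcomp Require Import all_boot all_order all_algebra all_field.
Set Implicit Arguments. Unset Strict Implicit. Unset Printing Implicit Defensive.
Import Order.TTheory GRing.Theory Num.Theory.
Local Open Scope ring_scope.

(* Conjugation a |-> a^q on F_{q^2} and the "conjugate reciprocal"
   f~(X) = sum_i conj(a_i) X^(n-i) for f = sum_{i<=n} a_i X^i, deg f = n. *)
Definition tildep (F : fieldType) (q : nat) (f : {poly F}) : {poly F} :=
  \poly_(i < size f) ((f`_((size f).-1 - i)) ^+ q).

(* Lset q m eps k t tau lam L  ==  L \in \mathcal L_k(t, tau; lam),
   where m = (q+1)/d.  Degrees: deg P = n is encoded as size P = n.+1. *)
Definition Lset (F : fieldType) (q m : nat) (eps : F) (k t tau : nat)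
    (lam : F) (L : {poly F}) : Prop :=
  if tau == 0%N then
    [/\ size L = t.+1, tildep q L = lam *: L &
        coprimep L ('X^m - (eps ^+ k)%:P)]
  else
    [/\ (m - t <= tau <= t)%N,
        exists P Q : {poly F},
          [/\ L = P + 'X^(m - tau) * Q,
              size P = (t - tau).+1, tildep q P = lam *: P,
              size Q = (tau + t - m).+1 &
              tildep q Q = (lam * eps ^+ k) *: Q] &
        coprimep L ('X^m - (eps ^+ k)%:P)].

(* Main.v *)
Require Import Defs.
From HB Require Import structures.
From mathcomp Require Import all_boot all_order all_algebra all_field.
From mathcomp Require Import ring zify.
Import Order.TTheory GRing.Theory Num.Theory.
Lemma arith (q d m j1 j2 n1 n2 : nat) : q.+1 = 3 * d -> d = m * 2 -> j1 < d -> j2 < d ->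
  j1 + j2 + 1 = n1 * d + m -> m + (2 * j2 + 1) = n2 * d + j1 -> n1 < 2 -> n2 < 3 ->
  (q %% 18 = 5 /\ 1 + 3 * j1 = q.+1 %/ 6 /\ 2 + 3 * j2 = q.+1 %/ 3) \/
  (q %% 18 = 11 /\ 1 + 3 * j1 = 5 * q.+1 %/ 6 /\ 2 + 3 * j2 = 2 * q.+1 %/ 3).
Proof.
move=> qd dm h1 h2 E1 E2.
case: n1 E1 => [|[|n1]] E1 // _; case: n2 E2 => [|[|[|n2]]] E2 // _; lia.
Qed.

Local Open Scope ring_scope.
Lemma core (F : fieldType) (d : nat) (al be s t : F) :
 s ^+ d = 1 -> t ^+ d = 1 ->
 (forall k, (k < d)%N -> (al * s ^+ k = 1) \/ (be * t ^+ k = 1)) ->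
 (forall k, (k < d)%N -> ~ (al * s ^+ k = 1 /\ be * t ^+ k = 1)) ->
 forall k1, (k1 < d)%N -> al * s ^+ k1 = 1 ->
 forall k2, (k2 < d)%N -> be * t ^+ k2 = 1 ->
 [/\ s = -1, t = -1 & (-1 : F) != 1].
Proof.
move=> hs ht H H' k1 k1d P1 k2 k2d Q2.
have d0 : (0 < d)%N by case: (d) k1d.
have H1 k : al * s ^+ k = 1 \/ be * t ^+ k = 1.
  by rewrite -(expr_mod k hs) -(expr_mod k ht); apply: H; rewrite ltn_pmod.
have H2 k : ~ (al * s ^+ k = 1 /\ be * t ^+ k = 1).
  by rewrite -(expr_mod k hs) -(expr_mod k ht); apply: H'; rewrite ltn_pmod.
have s1 : s != 1.
  apply/eqP=> s1; apply: (H2 k2); split=> //.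
  by move: P1; rewrite s1 !expr1n.
have t1 : t != 1.
  apply/eqP=> t1; apply: (H2 k1); split=> //.
  by move: Q2; rewrite t1 !expr1n.
have Q1 : be * t ^+ k1.+1 = 1.
  case: (H1 k1.+1) => // E; case/eqP: s1.
  by move: E; rewrite exprSr mulrA P1 mul1r.
have P2 : al * s ^+ k2.+1 = 1.
  case: (H1 k2.+1) => // E; case/eqP: t1.
  by move: E; rewrite exprSr mulrA Q2 mul1r.
have s2 : s ^+ 2 = 1.
  case: (H1 k1.+2) => E.
    by move: E; rewrite -addn2 exprD mulrA P1 mul1r.
  by case/eqP: t1; move: E; rewrite exprSr mulrA Q1 mul1r.
have t2 : t ^+ 2 = 1.
  case: (H1 k2.+2) => E; last first.
    by move: E; rewrite -addn2 exprD mulrA Q2 mul1r.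
  by case/eqP: s1; move: E; rewrite exprSr mulrA P2 mul1r.
have sm : s = -1.
  by move/eqP: s2; rewrite sqrf_eq1 (negbTE s1) => /eqP.
have tm : t = -1.
  by move/eqP: t2; rewrite sqrf_eq1 (negbTE t1) => /eqP.
by split=> //; rewrite -sm.
Qed.
Arguments core {F d al be s t}.
Section U.
Variable F : fieldType.
Implicit Types A B e lam : F.

Lemma coefL A B i : (1 + A *: 'X + B *: 'X^2 : {poly F})`_i =
  if i == 0%N then 1 else if i == 1%N then A else if i == 2%N then B else 0.
Proof.
rewrite !coefD coef1 !coefZ coefX coefXn.
by case: i => [|[|[|i]]] /=; rewrite ?mulr1 ?mulr0 ?addr0 ?add0r.
Qed.

Lemma tcoef q (f : {poly F}) i : (i < size f)%N ->
  (tildep q f)`_i = f`_((size f).-1 - i) ^+ q.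
Proof. by rewrite /tildep coef_poly => ->. Qed.

Lemma unpack1 q k A B e lam :
  Lset q 3 e k 2 1 lam (1 + A *: 'X + B *: 'X^2) ->
  [/\ A ^+ q = lam, lam * A = 1 & B ^+ q = lam * e ^+ k * B].
Proof.
rewrite /Lset /= => -[_ [P [Q [EL sP tP sQ tQ]]] _].
have c i : (1 + A *: 'X + B *: 'X^2 : {poly F})`_i = P`_i + ('X^2 * Q)`_i.
  by rewrite EL coefD.
have P0 : P`_0 = 1 by move: (c 0%N); rewrite coefL coefXnM /= addr0.
have P1 : P`_1 = A by move: (c 1%N); rewrite coefL coefXnM /= addr0.
have Q0 : Q`_0 = B.
  by move: (c 2%N); rewrite coefL coefXnM /= nth_default ?sP // add0r.
have t0 := @tcoef q P 0; have t1 := @tcoef q P 1.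
rewrite sP /= in t0 t1.
have u0 := @tcoef q Q 0; rewrite sQ /= in u0.
split.
- by rewrite -P1 -t0 // tP coefZ P0 mulr1.
- by rewrite -P1 -[_ * _]coefZ -tP t1 // P0 expr1n.
- by rewrite -Q0 -u0 // tQ coefZ.
Qed.

Lemma unpack2 q k A B e lam :
  Lset q 3 e k 2 2 lam (1 + A *: 'X + B *: 'X^2) ->
  [/\ lam = 1, B ^+ q = lam * e ^+ k * A & A ^+ q = lam * e ^+ k * B].
Proof.
rewrite /Lset /= => -[_ [P [Q [EL sP tP sQ tQ]]] _].
have c i : (1 + A *: 'X + B *: 'X^2 : {poly F})`_i = P`_i + ('X^1 * Q)`_i.
  by rewrite EL coefD.
have P0 : P`_0 = 1 by move: (c 0%N); rewrite coefL coefXnM /= addr0.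
have Q0 : Q`_0 = A.
  by move: (c 1%N); rewrite coefL coefXnM /= nth_default ?sP // add0r.
have Q1 : Q`_1 = B.
  by move: (c 2%N); rewrite coefL coefXnM /= nth_default ?sP // add0r.
have t0 := @tcoef q P 0; rewrite sP /= in t0.
have u0 := @tcoef q Q 0; have u1 := @tcoef q Q 1.
rewrite sQ /= in u0 u1.
have l1 : lam = 1.
  by move: (t0 isT); rewrite tP coefZ P0 expr1n mulr1.
split=> //.
- by rewrite -Q1 -u0 // tQ coefZ Q0.
- by rewrite -Q0 -u1 // tQ coefZ Q1.
Qed.

Lemma unpackc q k t tau A B e lam :
  Lset q 3 e k t tau lam (1 + A *: 'X + B *: 'X^2) ->
  coprimep (1 + A *: 'X + B *: 'X^2) ('X^3 - (e ^+ k)%:P).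
Proof. by rewrite /Lset; case: (tau == 0%N) => -[]. Qed.

End U.
Arguments unpack1 {F q k A B e lam}.
Arguments unpack2 {F q k A B e lam}.
Arguments unpackc {F q k t tau A B e lam}.
Lemma nocop (F : fieldType) (A c : F) : A != 0 -> A ^+ 3 * c = 1 ->
  ~~ coprimep (1 + A *: 'X + A ^+ 2 *: 'X^2) ('X^3 - c%:P).
Proof.
move=> A0 Ac; apply/negP => cop.
set L := (1 + _ + _ : {poly F}) in cop.
have E : A ^+ 3 *: ('X^3 - c%:P) = (A *: 'X - 1) * L.
  rewrite scalerBr scale_polyC Ac /L -!mul_polyC (rmorphXn polyC).
  ring.
have dv : L %| 'X^3 - c%:P.
  rewrite -(dvdpZr _ _ (expf_neq0 3 A0)) E; exact: dvdp_mull.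
have := coprimep_dvdl dv cop; rewrite coprimep_def gcdpp => /eqP sL.
have : L`_2 = 0 by rewrite nth_default ?sL.
rewrite /L !coefD coef1 !coefZ coefX coefXn /= mulr0 mulr1 !add0r.
by apply/eqP; rewrite expf_neq0.
Qed.
Arguments nocop {F A c}.
Lemma nd3 (x : int) : coprimez x 3 -> ~~ (3 %| x)%Z.
Proof.
move=> c; apply/negP => dx.
have : (3 %| gcdz x 3)%Z by rewrite dvdz_gcd dx dvdzz.
by move/eqP: c => ->.
Qed.

Lemma rmod (r : int) : coprimez r 3 -> coprimez (r - 1) 3 ->
  (r = -1 %[mod 3])%Z /\ ~~ coprimez (r - 2) 3.
Proof.
move=> /nd3 h1 /nd3 h2; split.
  move: h1 h2; rewrite !dvdzE. lia.
apply/negP => /nd3; move: h1 h2; rewrite !dvdzE; lia.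
Qed.

Theorem lemma4p10 (q : nat) (F : finFieldType) (d : nat) (eps : F)
    (r : int) (a b : F) (j1 j2 : nat) (tau : nat -> nat) (lam : nat -> F) :
  (exists p n : nat, [/\ prime p, (0 < n)%N & q = (p ^ n)%N]) ->
  #|F| = (q ^ 2)%N ->
  (d %| q.+1)%N ->
  (q.+1 %/ d = 3)%N ->
  d.-primitive_root eps ->
  a != 0 -> b != 0 ->
  (j1 < d)%N -> (j2 < d)%N ->
  (forall k : nat, (k < d)%N ->
     [/\ (tau k <= 2)%N,
         lam k ^+ q.+1 = 1,
         Lset q 3 eps k 2 (tau k) (lam k)
           (1 + (a * eps ^+ (j1 * k)) *: 'X + (b * eps ^+ (j2 * k)) *: 'X^2) &
         coprimez (r - 2 + (tau k)%:Z) 3]) ->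
  (exists2 k : nat, (k < d)%N & tau k = 2%N) ->
  (exists2 k : nat, (k < d)%N & tau k = 1%N) ->
  let h : {poly F} := 1 + a *: 'X^(1 + 3 * j1) + b *: 'X^(2 + 3 * j2) in
  [/\ (r = -1 %[mod 3])%Z,
      ~~ odd d,
      (exists c : bool, forall k : nat, (k < d)%N ->
        (tau k == 2%N) = (odd k == c) /\ (tau k == 1%N) = (odd k != c)),
      b ^+ 3 = -1 &
      (a = b^-1 \/ a = - b^-1)] /\
  [/\ (j1 + j2 + 1 = d %/ 2 %[mod d])%N,
      (2 * j2%:Z - j1%:Z + 1 = (d %/ 2)%N%:Z %[mod d%:Z])%Z,
      (forall k p : nat, (k < d)%N -> lam k ^+ 3 = eps ^+ p ->
         (p%:Z + (r - 2 + (tau k)%:Z) * k%:Z = r * k%:Z %[mod d%:Z])%Z) &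
      ((q %% 18 = 5)%N /\
         h = 1 + a *: 'X^(q.+1 %/ 6) + b *: 'X^(q.+1 %/ 3))
      \/ ((q %% 18 = 11)%N /\
         h = 1 + a *: 'X^(5 * q.+1 %/ 6) + b *: 'X^(2 * q.+1 %/ 3))].
Proof.
move=> _ _ dq qd prim a0 b0 j1d j2d H [k1 k1d t1] [k2 k2d t2] h.
have [rm nc] : (r = -1 %[mod 3])%Z /\ ~~ coprimez (r - 2) 3.
  have [_ _ _ c1] := H k1 k1d; have [_ _ _ c2] := H k2 k2d.
  rewrite t1 in c1; rewrite t2 in c2.
  apply: rmod.
    by have -> : r = r - 2 + 2%:Z by lia.
  by have -> : r - 1 = r - 2 + 1%:Z by lia.
have tau12 k : (k < d)%N -> tau k = 1%N \/ tau k = 2%N.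
  move=> kd; have [t2k _ _ ck] := H k kd.
  move: t2k ck; case: (tau k) => [|[|[|n]]].
  - by move=> _ c; exfalso; move/negP: nc; apply; rewrite addr0 in c.
  - by move=> _ _; left.
  - by move=> _ _; right.
  - by [].
have d0 : (0 < d)%N := prim_order_gt0 prim.
have ed : eps ^+ d = 1 := prim_expr_order prim.
have eq1 : eps ^+ q * eps = 1.
  by rewrite -exprSr; apply/eqP; rewrite -(prim_order_dvd prim).
have ne n : (eps ^+ n) ^+ q * eps ^+ n = 1.
  by rewrite exprAC -exprMn eq1 expr1n.
pose A k := a * eps ^+ (j1 * k).
pose B k := b * eps ^+ (j2 * k).
have eps0 n : eps ^+ n != 0.
  apply: expf_neq0; apply/eqP => e0; move: ed; rewrite e0 expr0n gtn_eqF //.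
  by move/eqP; rewrite eq_sym oner_eq0.
have A0 k : A k != 0 by rewrite mulf_neq0.
have B0 k : B k != 0 by rewrite mulf_neq0.
have na : a ^+ q * a = 1.
  have [_ _ Ls _] := H k2 k2d; rewrite t2 in Ls.
  have [u1 u2 _] := unpack1 Ls.
  have : A k2 ^+ q * A k2 = 1 by rewrite u1.
  by rewrite /A exprMn mulrACA ne mulr1.
have nA k : A k ^+ q * A k = 1 by rewrite /A exprMn mulrACA ne mulr1.
have nb : b ^+ q * b = 1.
  have [_ _ Ls _] := H k1 k1d; rewrite t1 in Ls.
  have [v1 v2 v3] := unpack2 Ls.
  have X1 : A k1 * B k1 * eps ^+ k1 = 1.
    by rewrite -(nA k1) v3 v1 mul1r /A /B; ring.
  have : B k1 ^+ q * B k1 = 1 by rewrite v2 v1 mul1r -X1 /A /B; ring.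
  by rewrite /B exprMn mulrACA ne mulr1.
have nB k : B k ^+ q * B k = 1 by rewrite /B exprMn mulrACA ne mulr1.
have key k : (k < d)%N ->
  (tau k = 2%N /\ lam k = 1 /\ A k * B k * eps ^+ k = 1) \/
  (tau k = 1%N /\ lam k * A k = 1 /\ A k = B k ^+ 2 * eps ^+ k).
  move=> kd; have [_ _ Ls _] := H k kd.
  case: (tau12 k kd) => tk; rewrite tk in Ls.
  - right; have [u1 u2 u3] := unpack1 Ls; split=> //; split=> //.
    have l0 : lam k != 0.
      by apply/eqP=> l0; move: u2; rewrite l0 mul0r => /eqP; rewrite eq_sym oner_eq0.
    apply: (mulfI l0); rewrite u2 -(nB k) u3 /A /B; ring.
  - left; have [v1 v2 v3] := unpack2 Ls; split=> //; split=> //.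
    by rewrite -(nA k) v3 v1 mul1r /A /B; ring.
have nboth k : (k < d)%N ->
  ~ (A k * B k * eps ^+ k = 1 /\ A k = B k ^+ 2 * eps ^+ k).
  move=> kd [X Y]; have [_ _ Ls _] := H k kd.
  have cop := unpackc Ls.
  have BA : B k = A k ^+ 2.
    rewrite expr2 {2}Y -[LHS]mul1r -X; ring.
  have A3 : A k ^+ 3 * eps ^+ k = 1 by rewrite -X BA; ring.
  have BA' : b * eps ^+ (j2 * k) = (a * eps ^+ (j1 * k)) ^+ 2 := BA.
  rewrite BA' in cop.
  by have /negP := nocop (A0 k) A3; apply.
pose al := a * b; pose s := eps ^+ (j1 + j2 + 1).
pose be := a / b ^+ 2; pose t := eps ^+ j1 / eps ^+ (2 * j2 + 1).
have eX k : A k * B k * eps ^+ k = al * s ^+ k.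
  by rewrite /A /B /al /s -exprM !mulnDl mul1n !exprD; ring.
have eY k : (A k = B k ^+ 2 * eps ^+ k) <-> (be * t ^+ k = 1).
  have -> : be * t ^+ k = A k / (B k ^+ 2 * eps ^+ k).
    rewrite /be /t /A /B !exprMn exprVn -!exprM.
    have -> : ((2 * j2 + 1) * k = j2 * k * 2 + k)%N by ring.
    by rewrite exprD; field; rewrite !eps0 b0.
  split; last by move/divr1_eq.
  move=> E; rewrite E divff //; exact: mulf_neq0 (expf_neq0 _ (B0 k)) (eps0 k).
have [sm tm m1] : [/\ s = -1, t = -1 & (-1:F) != 1].
  have sd : s ^+ d = 1 by rewrite /s exprAC ed expr1n.
  have td : t ^+ d = 1.
    by rewrite /t exprMn exprVn !(exprAC eps _ d) ed !expr1n invr1 mulr1.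
  apply: (core (al:=al) (be:=be) sd td _ _ k1 k1d _ k2 k2d _).
  - move=> k kd; case: (key k kd) => [[_ [_ X]]|[_ [_ Y]]].
      by left; move: X; rewrite eX.
    by right; apply/eY.
  - move=> k kd [X Y]; apply: (nboth k kd); split; first by rewrite eX; exact: X.
    by apply/eY.
  - case: (key k1 k1d) => [[_ [_ X]]|[tk _]]; first by move: X; rewrite eX.
    by rewrite t1 in tk.
  - case: (key k2 k2d) => [[tk _]|[_ [_ Y]]]; last by apply/eY.
    by rewrite t2 in tk.
have dev : ~~ odd d.
  apply/negP => od; have : s ^+ d = 1 by rewrite /s exprAC ed expr1n.
  by rewrite sm -signr_odd od expr1 => /eqP; rewrite (negbTE m1).
have dm : d = (d %/ 2 * 2)%N.
  by rewrite divn2 -[LHS]odd_double_half (negbTE dev) add0n -muln2.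
have hm : eps ^+ (d %/ 2) = -1.
  have sq : (eps ^+ (d %/ 2)) ^+ 2 = 1 by rewrite -exprM -dm ed.
  have n1 : eps ^+ (d %/ 2) != 1.
    rewrite -(prim_order_dvd prim); apply/negP => /dvdn_leq; lia.
  by move/eqP: sq; rewrite sqrf_eq1 (negbTE n1) => /eqP.
have c1n : (j1 + j2 + 1 == d %/ 2 %[mod d])%N.
  by rewrite -(eq_prim_root_expr prim) hm; apply/eqP; exact: sm.
have c2n : (j1 == d %/ 2 + (2 * j2 + 1) %[mod d])%N.
  rewrite -(eq_prim_root_expr prim) exprD hm -tm /t divfK //.
have inv1 (x y : F) : x * x = 1 -> y * x = 1 -> y = x.
  by move=> xx yx; rewrite -[y]mulr1 -xx mulrA yx mul1r.
have sgsq n : (-1) ^+ n * (-1) ^+ n = 1 :> F.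
  by rewrite -exprD -signr_odd oddD addbb.
have alv : al = (-1) ^+ k1.
  apply: inv1 => //; case: (key k1 k1d) => [[_ [_ X]]|[tk _]].
    by move: X; rewrite eX sm.
  by rewrite t1 in tk.
have bev : be = (-1) ^+ k2.
  apply: inv1 => //; case: (key k2 k2d) => [[tk _]|[_ [_ Y]]].
    by rewrite t2 in tk.
  by move/eY: Y; rewrite tm.
have sgt k : (al * s ^+ k == 1) = (odd k == odd k1).
  rewrite alv sm -exprD -signr_odd oddD.
  by case: (odd k1); case: (odd k) => /=; rewrite ?expr0 ?expr1 ?eqxx // (negbTE m1).
have Xeq k : (k < d)%N -> (tau k == 2%N) = (odd k == odd k1).
  move=> kd; case: (key k kd) => [[tk [_ X]]|[tk [_ Y]]]; rewrite tk /= -sgt.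
    by move: X; rewrite eX => ->; rewrite !eqxx.
  apply/esym/negbTE/eqP => X; apply: (nboth k kd); split=> //.
  by rewrite eX.
have X0 : (al == 1) || (be == 1).
  case: (key 0%N d0) => [[_ [_ X]]|[_ [_ Y]]].
    by move: X; rewrite eX expr0 mulr1 => ->; rewrite eqxx.
  by move/eY: Y; rewrite expr0 mulr1 => ->; rewrite eqxx orbT.
have N0 : ~~ ((al == 1) && (be == 1)).
  apply/negP => /andP [/eqP a1 /eqP b1]; apply: (nboth 0%N d0); split.
    by rewrite eX expr0 mulr1.
  by apply/eY; rewrite expr0 mulr1.
have b3 : b ^+ 3 = al / be by rewrite /al /be; field; rewrite a0 b0.
have ab : a = al / b by rewrite /al mulfK.
split.
  split; [exact: rm | exact: dev | | |].
  - exists (odd k1) => k kd; rewrite Xeq //; split; first by [].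
    case: (tau12 k kd) => tk; rewrite tk /=.
      by move: (Xeq k kd); rewrite tk /= => <-.
    by move: (Xeq k kd); rewrite tk /= => <-.
  - move: X0 N0; rewrite b3 alv bev -[(-1) ^+ k1]signr_odd -[(-1) ^+ k2]signr_odd.
    case: (odd k1); case: (odd k2); rewrite ?expr0 ?expr1.
    - by rewrite (negbTE m1).
    - by move=> _ _; rewrite divr1.
    - by move=> _ _; rewrite invrN invr1 mul1r.
    - by rewrite eqxx.
  - rewrite ab alv -signr_odd; case: (odd k1); rewrite /= ?expr0 ?expr1 ?mul1r ?mulN1r.
      by right.
    by left.
split.
- by apply/eqP.
- apply/eqP; rewrite eqz_mod_dvd.
  have : (j1%:Z == (d %/ 2 + (2 * j2 + 1))%N %[mod d%:Z])%Z.
    by rewrite !modz_nat; apply/eqP; congr Posz; apply/eqP.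
  rewrite eqz_mod_dvd => dv.
  have -> : 2 * j2%:Z - j1%:Z + 1 - (d %/ 2)%N%:Z
      = - (j1%:Z - (d %/ 2 + (2 * j2 + 1))%N%:Z) - d%:Z by lia.
  by rewrite rpredB ?rpredN ?dvdzz.
- move=> k p kd lp; apply/eqP; rewrite eqz_mod_dvd.
  case: (key k kd) => [[tk [l1 X]]|[tk [lA Y]]]; rewrite tk.
    have dp : (d %| p)%N by rewrite (prim_order_dvd prim) -lp l1 expr1n.
    have -> : p%:Z + (r - 2 + 2%:Z) * k%:Z - r * k%:Z = p%:Z by ring.
    by rewrite dvdzE.
  have nX : A k * B k * eps ^+ k != 1.
    by apply/eqP => X; apply: (nboth k kd).
  have ABm : A k * B k * eps ^+ k = -1.
    move: nX; rewrite eX sm alv -exprD -signr_odd.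
    by case: (odd (k1 + k)); rewrite ?expr0 ?expr1 ?eqxx.
  have A3 : A k ^+ 3 * eps ^+ k = 1.
    have E2 : (A k * B k * eps ^+ k) ^+ 2 = 1 by rewrite ABm sqrrN expr1n.
    rewrite -E2; apply/eqP; rewrite -subr_eq0; apply/eqP.
    transitivity (A k ^+ 2 * eps ^+ k * (A k - B k ^+ 2 * eps ^+ k)).
      by ring.
    by rewrite -Y subrr mulr0.
  have ep : eps ^+ p = eps ^+ k.
    by rewrite -lp -[lam k ^+ 3]mulr1 -A3 mulrA -exprMn lA expr1n mul1r.
  have -> : p%:Z + (r - 2 + 1%:Z) * k%:Z - r * k%:Z = p%:Z - k%:Z by ring.
  rewrite -eqz_mod_dvd !modz_nat; apply/eqP; congr Posz; apply/eqP.
  by rewrite -(eq_prim_root_expr prim) ep.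
- have q3 : q.+1 = (3 * d)%N by rewrite -{1}(divnK dq) qd.
  have md : (d %/ 2 < d)%N by lia.
  have E1 : (j1 + j2 + 1 = (j1 + j2 + 1) %/ d * d + d %/ 2)%N.
    by rewrite {1}(divn_eq (j1 + j2 + 1) d) (eqP c1n) modn_small.
  have E2 : (d %/ 2 + (2 * j2 + 1) = (d %/ 2 + (2 * j2 + 1)) %/ d * d + j1)%N.
    by rewrite {1}(divn_eq (d %/ 2 + (2 * j2 + 1)) d) -(eqP c2n) modn_small.
  have n1 : ((j1 + j2 + 1) %/ d < 2)%N by rewrite ltn_divLR //; lia.
  have n2 : ((d %/ 2 + (2 * j2 + 1)) %/ d < 3)%N by rewrite ltn_divLR //; lia.
  have [[e5 [F1 F2]]|[e11 [F1 F2]]] :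
    (q %% 18 = 5 /\ 1 + 3 * j1 = q.+1 %/ 6 /\ 2 + 3 * j2 = q.+1 %/ 3)%N \/
    (q %% 18 = 11 /\ 1 + 3 * j1 = 5 * q.+1 %/ 6 /\ 2 + 3 * j2 = 2 * q.+1 %/ 3)%N.
    exact: (arith _ _ _ _ _ _ _ q3 dm j1d j2d E1 E2 n1 n2).
    by left; split=> //; rewrite /h F1 F2.
  by right; split=> //; rewrite /h F1 F2.
Qed.
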